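(* Let $n,m\ge 3$ and let $G=P_n\square P_m$ be the grid graph. No minimal resolving set of $G$ contains three vertices that are on the same line.
   Context: The grid graph $P_n\square P_m$ has vertex set $\{(i,j):0\le i\le n-1,\ 0\le j\le m-1\}$, with $(i,j)$ adjacent to $(k,l)$ iff $|i-k|+|j-l|=1$; distance $d((i,j),(k,l))=|i-k|+|j-l|$. A vertex $w$ resolves $u,v$ if $d(w,u)\ne d(w,v)$; a set $R$ is resolving if every pair of distinct vertices is resolved by some vertex of $R$; a minimal resolving set is a resolving set $R$ such that no $R\setminus\{x\}$, $x\in R$, is resolving. Vertices are on the same line if they all share their first coordinate or all share their second coordinate. *)

(* Defs.v *)
From mathcomp Require Import all_boot.
Set Implicit Arguments. Unset Strict Implicit. Unset Printing Implicit Defensive.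

Definition gvert (n m : nat) := ('I_n * 'I_m)%type.

Definition absdiff (a b : nat) : nat := (a - b) + (b - a).

(* graph distance in the grid: |i-k| + |j-l| *)
Definition gdist n m (u v : gvert n m) : nat :=
  absdiff u.1 v.1 + absdiff u.2 v.2.

Definition resolves n m (w u v : gvert n m) : bool := gdist w u != gdist w v.

Definition resolving n m (R : {set gvert n m}) : bool :=
  [forall u, forall v, (u != v) ==> [exists w in R, resolves w u v]].

Definition minimal_resolving n m (R : {set gvert n m}) : bool :=
  resolving R && [forall x in R, ~~ resolving (R :\ x)].

Definition same_line n m (a b c : gvert n m) : bool :=
  ((a.1 == b.1) && (b.1 == c.1)) || ((a.2 == b.2) && (b.2 == c.2)).

(* Main.v *)
Require Import Defs.
From mathcomp Require Import all_boot zify.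
Set Implicit Arguments. Unset Strict Implicit.

Lemma mid (A B x y z p q : nat) : (x <= y <= z) || (z <= y <= x) ->
  A + absdiff x p = B + absdiff x q -> A + absdiff z p = B + absdiff z q ->
  A + absdiff y p = B + absdiff y q.
Proof.
rewrite /absdiff => /orP[/andP[h1 h2]|/andP[h1 h2]] e1 e2.
- case: (leqP p q) => hpq; lia.
- case: (leqP p q) => hpq; lia.
Qed.

Lemma redund n m (a b c u v : gvert n m) :
  (((a.1 : nat) == b.1) && ((b.1 : nat) == c.1) && ((a.2 <= b.2 <= c.2) || (c.2 <= b.2 <= a.2)))
  || (((a.2 : nat) == b.2) && ((b.2 : nat) == c.2) && ((a.1 <= b.1 <= c.1) || (c.1 <= b.1 <= a.1))) ->
  resolves b u v -> resolves a u v || resolves c u v.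
Proof.
rewrite /resolves /gdist => H; apply: contraLR => /norP [/negPn/eqP Ha /negPn/eqP Hc].
apply/negPn/eqP.
case/orP: H => /andP[/andP[/eqP e1 /eqP e2] h].
- rewrite e1 in Ha; rewrite -e2 in Hc.
  exact: (@mid (absdiff b.1 u.1) (absdiff b.1 v.1) a.2 b.2 c.2 u.2 v.2 h Ha Hc).
- rewrite e1 in Ha; rewrite -e2 in Hc.
  rewrite [X in X = _]addnC [X in _ = X]addnC.
  rewrite [X in X = _]addnC [X in _ = X]addnC in Ha.
  rewrite [X in X = _]addnC [X in _ = X]addnC in Hc.
  exact: (@mid (absdiff b.2 u.2) (absdiff b.2 v.2) a.1 b.1 c.1 u.1 v.1 h Ha Hc).
Qed.

Lemma key n m (R : {set gvert n m}) (a b c : gvert n m) :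
  resolving R -> a \in R -> b \in R -> c \in R -> a != b -> c != b ->
  (((a.1 : nat) == b.1) && ((b.1 : nat) == c.1) && ((a.2 <= b.2 <= c.2) || (c.2 <= b.2 <= a.2)))
  || (((a.2 : nat) == b.2) && ((b.2 : nat) == c.2) && ((a.1 <= b.1 <= c.1) || (c.1 <= b.1 <= a.1))) ->
  resolving (R :\ b).
Proof.
move=> HR aR bR cR ab cb H.
apply/forallP => u; apply/forallP => v; apply/implyP => uv.
move/forallP: HR => /(_ u) /forallP /(_ v) /implyP /(_ uv) /existsP [w /andP[wR rw]].
apply/existsP.
case: (eqVneq w b) => [ewb|nwb].
- subst w. case/orP: (@redund _ _ a b c u v H rw) => r.
  + by exists a; rewrite !inE ab aR r.
  + by exists c; rewrite !inE cb cR r.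
- by exists w; rewrite !inE nwb wR rw.
Qed.

Theorem lemma5 (n m : nat) (hn : 3 <= n) (hm : 3 <= m)
    (R : {set gvert n m}) :
  minimal_resolving R ->
  ~ (exists a b c : gvert n m,
       [/\ a \in R, b \in R, c \in R,
           [&& a != b, b != c & a != c] & same_line a b c]).
Proof.
case/andP => HR /forallP Hmin [a [b [c [aR bR cR /and3P[ab bc ac] sl]]]].
have nb x : x \in R -> resolving (R :\ x) -> False.
  by move=> xR; move: (Hmin x); rewrite xR /= => /negP.
have pe (x y : gvert n m) : x != y -> ((x.1 : nat) == y.1) -> (x.2 : nat) != y.2.
  move=> xy e1; apply: contra xy => e2; case: x y e1 e2 => [x1 x2] [y1 y2] /= e1 e2.
  by apply/eqP; congr pair; apply/val_inj/eqP.
have pe2 (x y : gvert n m) : x != y -> ((x.2 : nat) == y.2) -> (x.1 : nat) != y.1.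
  move=> xy e1; apply: contra xy => e2; case: x y e1 e2 => [x1 x2] [y1 y2] /= e1 e2.
  by apply/eqP; congr pair; apply/val_inj/eqP.
rewrite eq_sym in bc.
case/orP: sl => /andP[/eqP e1 /eqP e2].
- have e3 : (a.1 : nat) == c.1 by rewrite e1 e2.
  have d1 := pe _ _ ab (introT eqP (f_equal val e1)).
  have d2 := pe _ _ bc (introT eqP (esym (f_equal val e2))).
  have d3 := pe _ _ ac e3.
  have : [|| (a.2 <= b.2 <= c.2) || (c.2 <= b.2 <= a.2),
             (b.2 <= a.2 <= c.2) || (c.2 <= a.2 <= b.2) |
             (a.2 <= c.2 <= b.2) || (b.2 <= c.2 <= a.2)].
    move: d1 d2 d3; case: (a.2) (b.2) (c.2) => [x ?] [y ?] [z ?] /=; lia.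
  case/or3P => h.
  + apply: (nb b bR); apply: (key HR aR bR cR ab bc); by rewrite e1 -e2 !eqxx h.
  + apply: (nb a aR); apply: (key HR bR aR cR _ _); first by rewrite eq_sym.
    * by rewrite eq_sym.
    * by rewrite e1 -e2 !eqxx h.
  + apply: (nb c cR); apply: (key HR aR cR bR ac _); first by rewrite eq_sym.
    by rewrite e1 -e2 !eqxx h.
- have e3 : (a.2 : nat) == c.2 by rewrite e1 e2.
  have d1 := pe2 _ _ ab (introT eqP (f_equal val e1)).
  have d2 := pe2 _ _ bc (introT eqP (esym (f_equal val e2))).
  have d3 := pe2 _ _ ac e3.
  have : [|| (a.1 <= b.1 <= c.1) || (c.1 <= b.1 <= a.1),
             (b.1 <= a.1 <= c.1) || (c.1 <= a.1 <= b.1) |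
             (a.1 <= c.1 <= b.1) || (b.1 <= c.1 <= a.1)].
    move: d1 d2 d3; case: (a.1) (b.1) (c.1) => [x ?] [y ?] [z ?] /=; lia.
  case/or3P => h.
  + apply: (nb b bR); apply: (key HR aR bR cR ab bc); by rewrite e1 -e2 !eqxx h orbT.
  + apply: (nb a aR); apply: (key HR bR aR cR _ _); first by rewrite eq_sym.
    * by rewrite eq_sym.
    * by rewrite e1 -e2 !eqxx h orbT.
  + apply: (nb c cR); apply: (key HR aR cR bR ac _); first by rewrite eq_sym.
    by rewrite e1 -e2 !eqxx h orbT.
Qed.
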